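(* Let $0<s<\tfrac12$ and $\gamma_2(s)=\frac{2-2^{-2s}}{1-2^{-2s}}$. For every $h\in\mathcal{H}$, $$\mathcal{E}^\delta_s(h)=\gamma_2(s)\,|I(h)|^{-2s}.$$
   Context: Let $\mathbb{R}^+=(0,\infty)$. Dyadic intervals. $\mathcal{D}$ is the family of dyadic intervals $I^j_k=(k2^{-j},(k+1)2^{-j}]$ with $j\in\mathbb{Z}$ and $k$ a nonnegative integer. Dyadic distance. $\delta(x,y)=\inf\{|I|:I\in\mathcal{D},\ x,y\in I\}$ for $x,y\in\mathbb{R}^+$. Haar system. $\mathcal{H}$ consists of the functions $h_I(x)=2^{j/2}h(2^jx-k)$ for $I=I^j_k\in\mathcal{D}$, where $h=\chi_{(0,1/2]}-\chi_{(1/2,1]}$. For $h=h_I$ write $I(h)=I$. Energy form. $\mathcal{E}^\delta_s(\varphi)=\iint_{(\mathbb{R}^+)^2}\frac{|\varphi(x)-\varphi(y)|^2}{\delta(x,y)^{2s}}\,\frac{dx\,dy}{\delta(x,y)}$. *)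

(* Defs.v *)
From HB Require Import structures.
From mathcomp Require Import all_boot all_order all_algebra.
From mathcomp Require Import all_classical all_reals all_analysis.
Set Implicit Arguments. Unset Strict Implicit. Unset Printing Implicit Defensive.
Import Order.TTheory GRing.Theory Num.Theory.
Local Open Scope classical_set_scope.
Local Open Scope ring_scope.

Section Dyadic.
Variable R : realType.

Definition dyadic_int (j : int) (k : nat) : set R :=
  [set x | k%:R * (2:R) ^ (- j) < x /\ x <= k.+1%:R * (2:R) ^ (- j)].

Definition dyadic_len (j : int) : R := (2:R) ^ (- j).

Definition delta (x y : R) : R :=
  inf [set l | exists j k, l = dyadic_len j /\ dyadic_int j k x /\ dyadic_int j k y].

Definition haar_mother (t : R) : R :=
  (if (0 < t) && (t <= 2^-1) then 1 else 0)
  - (if (2^-1 < t) && (t <= 1) then 1 else 0).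

Definition haar (j : int) (k : nat) (x : R) : R :=
  (2:R) `^ (j%:~R / 2) * haar_mother ((2:R) ^ j * x - k%:R).

Definition quadrant : set (R * R) := [set z | 0 < z.1 /\ 0 < z.2].

Definition energy_integrand (s : R) (phi : R -> R) (z : R * R) : R :=
  `|phi z.1 - phi z.2| ^+ 2 / (delta z.1 z.2 `^ (2 * s) * delta z.1 z.2).

Definition energy (s : R) (phi : R -> R) : \bar R :=
  (\int[(@lebesgue_measure R \x @lebesgue_measure R)%E]_(z in quadrant)
     (energy_integrand s phi z)%:E)%E.

Definition gamma2 (s : R) : R := (2 - 2 `^ (- (2 * s))) / (1 - 2 `^ (- (2 * s))).

End Dyadic.

(* Main.v *)
Require Import Defs.
From HB Require Import structures.
From mathcomp Require Import all_boot all_order all_algebra.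
From mathcomp Require Import all_classical all_reals all_analysis.
From mathcomp Require Import measurable_realfun.
From mathcomp Require Import zify ring lra.
Import Order.TTheory GRing.Theory Num.Theory.
Local Open Scope ring_scope.
Section S.
Set Implicit Arguments.
Local Open Scope classical_set_scope.
Variable R : realType.

Lemma two_unit : (2:R) \is a GRing.unit. Proof. by rewrite unitfE. Qed.
Lemma pow2_gt0 (j:int) : 0 < (2:R)^j. Proof. exact: exprz_gt0. Qed.

Lemma dyP (j : int) (k : nat) (x : R) :
  dyadic_int j k x <-> (k%:R < x * 2^j /\ x * 2^j <= k.+1%:R).
Proof.
rewrite /dyadic_int /= -!invr_expz.
have h := pow2_gt0 j.
by rewrite ltr_pdivrMr // ler_pdivlMr.
Qed.

Lemma dy_uniq j k k' (x : R) : dyadic_int j k x -> dyadic_int j k' x -> k = k'.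
Proof.
move=> /dyP[a b] /dyP[c d].
apply/eqP; rewrite eqn_leq; apply/andP; split.
- have : k%:R < k'.+1%:R :> R by apply: lt_le_trans a d.
  by rewrite ltr_nat ltnS.
- have : k'%:R < k.+1%:R :> R by apply: lt_le_trans c b.
  by rewrite ltr_nat ltnS.
Qed.

Lemma dy_parent j k (x : R) : dyadic_int j k x -> dyadic_int (j - 1) (k %/ 2) x.
Proof.
move=> /dyP[a b]; apply/dyP.
have -> : x * 2 ^ (j - 1) = (x * 2^j) / 2.
  by rewrite exprzDr ?two_unit // -invr_expz expr1z mulrA.
have h1 : ((k %/ 2)%:R * 2 <= k%:R :> R).
  by rewrite -natrM ler_nat leq_divM.
have h2 : (k.+1%:R <= (k %/ 2).+1%:R * 2 :> R).
  by rewrite -natrM ler_nat ltn_ceil.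
split; lra.
Qed.

Lemma dy_anc j k (x : R) (m : nat) :
  dyadic_int j k x -> dyadic_int (j - m%:Z) (k %/ 2^m) x.
Proof.
move=> h; elim: m => [|m IH]; first by rewrite subr0 divn1.
have -> : j - m.+1%:Z = j - m%:Z - 1 by lia.
by rewrite expnSr divnMA; apply: dy_parent.
Qed.

Definition same j (x y : R) := exists k, dyadic_int j k x /\ dyadic_int j k y.

Lemma same_mono (i j : int) (x y : R) : same j x y -> i <= j -> same i x y.
Proof.
move=> [k [a b]] ij.
have [m hm] : exists m : nat, j = i + m%:Z by exists `|j - i|%N; lia.
exists (k %/ 2^m)%N; rewrite -(addrK (m%:Z) i) -hm.
by split; apply: dy_anc.
Qed.

Lemma delta_eq J (x y : R) : same J x y -> ~ same (J+1) x y ->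
  delta x y = dyadic_len R J.
Proof.
move=> sJ nJ; rewrite /delta.
set S := [set l | _].
have SJ : S (dyadic_len R J) by case: sJ => k [a b]; exists J, k.
have lbS : lbound S (dyadic_len R J).
  move=> l [j' [k' [-> [a b]]]].
  have le : j' <= J.
    rewrite leNgt; apply/negP => lt; apply: nJ.
    apply: (@same_mono _ j'); first by exists k'.
    lia.
  rewrite /dyadic_len; apply: (ler_weXz2l (x:=2:R)); first by rewrite ler1n.
  by rewrite lerN2.
apply/eqP; rewrite eq_le; apply/andP; split.
- have hl : has_lbound S by exists 0 => l [j' [k' [-> _]]]; apply/ltW/pow2_gt0.
  exact: (ge_inf hl SJ).
- by apply: lb_le_inf => //; exists (dyadic_len R J).
Qed.


Lemma dy_itv j k : dyadic_int j k = [set` `]k%:R * (2:R) ^ (- j), k.+1%:R * (2:R) ^ (- j)]%O].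
Proof. apply/seteqP; split => x /=; rewrite /dyadic_int /=.
 by rewrite in_itv /= => -[-> ->]. by rewrite in_itv /= => /andP. Qed.

Lemma dy_meas j k : measurable (dyadic_int j k : set (measurableTypeR R)).
Proof. by rewrite dy_itv; exact: measurable_itv. Qed.

Lemma dy_leb j k : lebesgue_measure (dyadic_int j k : set (measurableTypeR R)) = (dyadic_len R j)%:E.
Proof.
rewrite dy_itv lebesgue_measure_itv /= lte_fin.
have h := pow2_gt0 (- j).
rewrite ltr_pM2r // ltr_nat ltnSn -EFinB; congr (_%:E).
rewrite /dyadic_len -mulrBl -natrB // subSnn mul1r //.
Qed.

Variables (j : int) (k : nat).

Definition I := dyadic_int j k : set R.
Definition I1 := dyadic_int (j+1) k.*2 : set R.
Definition I2 := dyadic_int (j+1) k.*2.+1 : set R.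
Definition J (m : nat) := dyadic_int (j - m%:Z) (k %/ 2^m)%N : set R.

Lemma x2 (x : R) : x * 2 ^ (j + 1) = 2 * (x * 2^j).
Proof. rewrite exprzDr; last exact: two_unit. rewrite expr1z; ring. Qed.

Lemma I_split x : I x -> I1 x \/ I2 x.
Proof.
move=> /dyP[a b]; rewrite /I1 /I2 !dyP x2.
have e1 : (k.*2)%:R = 2 * k%:R :> R by rewrite -muln2 natrM mulrC.
have e2 : (k.*2.+1)%:R = 2 * k%:R + 1 :> R by rewrite -addn1 natrD e1.
have e3 : (k.*2.+2)%:R = 2 * k%:R + 2 :> R by rewrite -addn2 natrD e1.
have e4 : (k.+1)%:R = k%:R + 1 :> R by rewrite -addn1 natrD.
rewrite e1 e2 e3; rewrite e4 in b.
case: (leP (2 * (x * 2 ^ j)) (2 * k%:R + 1)) => h.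
- by left; split; lra.
- by right; split; lra.
Qed.

Lemma I1_sub x : I1 x -> I x.
Proof.
move=> /dy_parent; rewrite addrK.
by have -> : (k.*2 %/ 2 = k)%N by lia.
Qed.

Lemma I2_sub x : I2 x -> I x.
Proof.
move=> /dy_parent; rewrite addrK.
by have -> : (k.*2.+1 %/ 2 = k)%N by lia.
Qed.

Lemma I12 x : I1 x -> I2 x -> False.
Proof. by move=> a b; have := dy_uniq a b; lia. Qed.

Lemma J0 : J 0 = I.
Proof. by rewrite /J subr0 divn1. Qed.

Lemma J_mono m m' y : J m y -> (m <= m')%N -> J m' y.
Proof.
move=> h mm'.
have := dy_anc (m' - m)%N h.
rewrite -divnMA -expnD subnKC //.
by have -> : j - m%:Z - (m' - m)%N%:Z = j - m'%:Z by lia.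
Qed.

Lemma I_J m x : I x -> J m x.
Proof. by rewrite -J0 => h; apply: J_mono h _. Qed.

Lemma J_exists y : 0 < y -> exists m, J m y.
Proof.
move=> y0.
pose N := (Num.truncn (y * 2 ^ j)).+1.
exists (k + N)%N; apply/dyP.
have -> : (k %/ 2 ^ (k + N))%N = 0%N.
  apply: divn_small; rewrite expnD.
  apply: (leq_trans (ltn_expl k (isT : (1 < 2)%N))).
  by rewrite leq_pmulr // expn_gt0.
have e : y * 2 ^ (j - (k + N)%N%:Z) = y * 2^j / (2 ^ (k + N)%N)%:R.
  rewrite exprzDr ?two_unit // -invr_expz mulrA; congr (_ * _^-1).
  by rewrite natrX; first [rewrite -exprnP | rewrite exprnP].
rewrite e; have p : (0 < (2 ^ (k + N))%N%:R :> R) by rewrite ltr0n expn_gt0.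
split; first by rewrite divr_gt0 // mulr_gt0 // pow2_gt0.
rewrite ler_pdivrMr // mul1r.
have t1 := Num.Theory.truncnS_gt (y * 2 ^ j).
apply: (le_trans (ltW t1)); rewrite -/N ler_nat.
apply: (leq_trans (ltnW (ltn_expl N (isT : (1 < 2)%N)))).
by rewrite leq_exp2l // leq_addl.
Qed.

Lemma m_exists y : 0 < y -> ~ I y -> exists m, J m.+1 y /\ ~ J m y.
Proof.
move=> y0 nI; have [M hM] := @J_exists y y0.
elim: M hM => [|M IH] hM; first by rewrite J0 in hM.
have [hJ|hJ] := pselect (J M y); first exact: IH.
by exists M.
Qed.

Lemma m_uniq m m' y : J m.+1 y -> ~ J m y -> J m'.+1 y -> ~ J m' y -> m = m'.
Proof.
move=> a b c d; apply/eqP; rewrite eqn_leq; apply/andP; split.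
- rewrite leqNgt; apply/negP => lt; apply: b; exact: (J_mono _ c lt).
- rewrite leqNgt; apply/negP => lt; apply: d; exact: (J_mono _ a lt).
Qed.

Lemma same_sym i (x y : R) : same i x y -> same i y x.
Proof. by move=> [k' [a b]]; exists k'. Qed.

Lemma delta12 x y : I1 x -> I2 y -> delta x y = dyadic_len R j /\ delta y x = dyadic_len R j.
Proof.
move=> a b.
have s1 : same j x y by exists k; split; [exact: I1_sub|exact: I2_sub].
have n1 : ~ same (j+1) x y.
  move=> [k' [c d]]; have e1 := dy_uniq a c; have e2 := dy_uniq b d; lia.
split; apply: delta_eq => //; first exact: same_sym.
by move/same_sym.
Qed.

Lemma deltam m x y : I x -> J m.+1 y -> ~ J m y ->
  delta x y = dyadic_len R (j - m.+1%:Z) /\ delta y x = dyadic_len R (j - m.+1%:Z).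
Proof.
move=> a b c.
have s1 : same (j - m.+1%:Z) x y by exists (k %/ 2^m.+1)%N; split => //; exact: I_J.
have n1 : ~ same (j - m.+1%:Z + 1) x y.
  have -> : j - m.+1%:Z + 1 = j - m%:Z by lia.
  move=> [k' [d e]]; apply: c.
  by rewrite /J -(dy_uniq d (I_J m a)).
split; apply: delta_eq => //; first exact: same_sym.
by move/same_sym.
Qed.


Definition c : R := 2 `^ (j%:~R / 2).

Lemma e1 : (k.*2)%:R = 2 * k%:R :> R.
Proof. by rewrite -muln2 natrM mulrC. Qed.
Lemma e2 : (k.*2.+1)%:R = 2 * k%:R + 1 :> R.
Proof. by rewrite -addn1 natrD e1. Qed.
Lemma e3 : (k.*2.+2)%:R = 2 * k%:R + 2 :> R.
Proof. by rewrite -addn2 natrD e1. Qed.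
Lemma e4 : (k.+1)%:R = k%:R + 1 :> R.
Proof. by rewrite -addn1 natrD. Qed.

Lemma haar_I1 x : I1 x -> haar j k x = c.
Proof.
rewrite /I1 dyP x2 e1 e2 => -[a b].
rewrite /haar /haar_mother (mulrC (2^j) x) -/c.
set u := x * 2^j - k%:R.
have h1 : (0 < u) && (u <= 2^-1) by apply/andP; split; rewrite /u; lra.
have h2 : (2^-1 < u) && (u <= 1) = false.
  by apply/negbTE/negP => /andP[p q]; move: p q; rewrite /u; lra.
by rewrite h1 h2 subr0 mulr1.
Qed.

Lemma haar_I2 x : I2 x -> haar j k x = - c.
Proof.
rewrite /I2 dyP x2 e2 e3 => -[a b].
rewrite /haar /haar_mother (mulrC (2^j) x) -/c.
set u := x * 2^j - k%:R.
have h1 : (2^-1 < u) && (u <= 1) by apply/andP; split; rewrite /u; lra.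
have h2 : (0 < u) && (u <= 2^-1) = false.
  by apply/negbTE/negP => /andP[p q]; move: p q; rewrite /u; lra.
by rewrite h1 h2 sub0r mulrN1.
Qed.

Lemma haar_out x : ~ I x -> haar j k x = 0.
Proof.
move=> nI.
rewrite /haar /haar_mother (mulrC (2^j) x).
set u := x * 2^j - k%:R.
have h1 : (2^-1 < u) && (u <= 1) = false.
  apply/negbTE/negP => /andP[p q]; apply: nI; apply/dyP; rewrite e4.
  by move: p q; rewrite /u; split; lra.
have h2 : (0 < u) && (u <= 2^-1) = false.
  apply/negbTE/negP => /andP[p q]; apply: nI; apply/dyP; rewrite e4.
  by move: p q; rewrite /u; split; lra.
by rewrite h1 h2 subr0 mulr0.
Qed.


Variable s : R.

Definition L := dyadic_len R j.
Definition D (m : nat) := dyadic_len R (j - m.+1%:Z).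
Definition A (m : nat) := J m.+1 `\` J m.

Definition cn (n : nat) : R := match n with
  | 0%N => `|c + c| ^+ 2 / (L `^ (2 * s) * L)
  | m.+1 => `|c| ^+ 2 / (D m `^ (2 * s) * D m) end.
Definition P (n : nat) : set (R * R) := match n with
  | 0%N => I1 `*` I2
  | m.+1 => I `*` A m end.
Definition Q (n : nat) : set (R * R) := match n with
  | 0%N => I2 `*` I1
  | m.+1 => A m `*` I end.

Definition g (n : nat) (z : R * R) : \bar R :=
  ((cn n * \1_(P n) z)%:E + (cn n * \1_(Q n) z)%:E)%E.

Lemma len_gt0 i : 0 < dyadic_len R i.
Proof. exact: pow2_gt0. Qed.

Lemma cn_ge0 n : 0 <= cn n.
Proof.
case: n => [|m] /=; apply: divr_ge0; rewrite ?exprn_ge0 //;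
  apply: mulr_ge0; rewrite ?powR_ge0 //; apply: ltW; exact: len_gt0.
Qed.

Lemma g_ge0 n z : (0 <= g n z)%E.
Proof.
by apply: adde_ge0; rewrite lee_fin; apply: mulr_ge0; rewrite ?cn_ge0 ?indic_ge0.
Qed.

Lemma g0 n z : ~ P n z -> ~ Q n z -> g n z = 0%E.
Proof. by move=> p q; rewrite /g !indicE (memNset p) (memNset q) !mulr0 adde0. Qed.

Lemma gP n z : P n z -> ~ Q n z -> g n z = (cn n)%:E.
Proof. by move=> p q; rewrite /g !indicE (mem_set p) (memNset q) mulr0 mulr1 adde0. Qed.

Lemma gQ n z : ~ P n z -> Q n z -> g n z = (cn n)%:E.
Proof. by move=> p q; rewrite /g !indicE (memNset p) (mem_set q) mulr0 mulr1 add0e. Qed.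

Lemma series_single (f : nat -> \bar R) n0 : (forall n, (0 <= f n)%E) ->
  (forall n, n != n0 -> f n = 0%E) -> (\sum_(n <oo) f n)%E = f n0.
Proof.
move=> f0 fn.
rewrite (@nneseriesD1 _ f n0 xpredT) //.
by rewrite eseries0 ?adde0 // => i _ /andP[_ h]; exact: fn.
Qed.

Lemma I_notA m x : I x -> ~ A m x.
Proof. by move=> h [_]; apply; apply: I_J. Qed.

Lemma A_notI m x : A m x -> ~ I x.
Proof. by move=> h1 h2; exact: (I_notA h2 h1). Qed.

Lemma c_gt0 : 0 < c.
Proof. by apply: powR_gt0. Qed.


Lemma absc_eq x : I x -> `|haar j k x| = `|c|.
Proof. by case/I_split => h; rewrite ?(haar_I1 h) ?(haar_I2 h) ?normrN. Qed.

Lemma pointwise z : quadrant z ->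
  ((energy_integrand s (haar j k) z)%:E = \sum_(n <oo) g n z)%E.
Proof.
case: z => x y [/= x0 y0].
rewrite /energy_integrand /=.
have Z : (forall n, ~ P n (x,y) /\ ~ Q n (x,y)) -> haar j k x = haar j k y ->
    ((`|haar j k x - haar j k y| ^+ 2 /
      (delta x y `^ (2 * s) * delta x y))%:E = \sum_(n <oo) g n (x,y))%E.
  move=> H e; rewrite e subrr normr0 expr2 !mul0r.
  by rewrite (@eseries0 _ _ 0%N xpredT) // => n _ _; apply: g0; apply H.
have [Ix|Ix] := pselect (I x); have [Iy|Iy] := pselect (I y).
- case: (I_split Ix) => [x1|x2']; case: (I_split Iy) => [y1|y2].
  + apply: Z; last by rewrite !haar_I1.
    case=> [|m] /=; split.
    * by move=> [_ h]; exact: (I12 y1 h).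
    * by move=> [h _]; exact: (I12 x1 h).
    * by move=> [_ h]; exact: (I_notA Iy h).
    * by move=> [h _]; exact: (I_notA Ix h).
  + rewrite (haar_I1 x1) (haar_I2 y2) (delta12 x1 y2).1.
    rewrite (series_single _ 0%N); first last.
    * case=> [//|m] _; apply: g0 => /=.
      - by move=> [_ h]; exact: (I_notA Iy h).
      - by move=> [h _]; exact: (I_notA Ix h).
    * by move=> n; exact: g_ge0.
    rewrite gP //=; last by move=> [h _]; exact: (I12 x1 h).
    by rewrite opprK.
  + rewrite (haar_I2 x2') (haar_I1 y1) (delta12 y1 x2').2.
    rewrite (series_single _ 0%N); first last.
    * case=> [//|m] _; apply: g0 => /=.
      - by move=> [_ h]; exact: (I_notA Iy h).
      - by move=> [h _]; exact: (I_notA Ix h).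
    * by move=> n; exact: g_ge0.
    rewrite gQ //=; last by move=> [_ h]; exact: (I12 y1 h).
    by rewrite -opprD normrN.
  + apply: Z; last by rewrite !haar_I2.
    case=> [|m] /=; split.
    * by move=> [h _]; exact: (I12 h x2').
    * by move=> [_ h]; exact: (I12 h y2).
    * by move=> [_ h]; exact: (I_notA Iy h).
    * by move=> [h _]; exact: (I_notA Ix h).
- have [m [a b]] := m_exists y0 Iy.
  rewrite (haar_out Iy) subr0 (absc_eq Ix) (deltam Ix a b).1.
  rewrite (series_single _ m.+1); first last.
  + case=> [|m'] hm; apply: g0 => /=.
    * by move=> [_ h]; apply: Iy; exact: I2_sub.
    * by move=> [_ h]; apply: Iy; exact: I1_sub.
    * move=> [_ [h1 h2]]; move: hm; rewrite eqSS => /eqP; apply.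
      exact: (m_uniq h1 h2 a b).
    * by move=> [h _]; exact: (I_notA Ix h).
  + by move=> n; exact: g_ge0.
  by rewrite gP //= => [[h _]]; exact: (I_notA Ix h).
- have [m [a b]] := m_exists x0 Ix.
  rewrite (haar_out Ix) sub0r normrN (absc_eq Iy) (deltam Iy a b).2.
  rewrite (series_single _ m.+1); first last.
  + case=> [|m'] hm; apply: g0 => /=.
    * by move=> [h _]; apply: Ix; exact: I1_sub.
    * by move=> [h _]; apply: Ix; exact: I2_sub.
    * by move=> [_ h]; exact: (I_notA Iy h).
    * move=> [[h1 h2] _]; move: hm; rewrite eqSS => /eqP; apply.
      exact: (m_uniq h1 h2 a b).
  + by move=> n; exact: g_ge0.
  by rewrite gQ //= => [[_ h]]; exact: (I_notA Iy h).
- apply: Z; last by rewrite !haar_out.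
  case=> [|m] /=; split.
  + by move=> [h _]; apply: Ix; exact: I1_sub.
  + by move=> [h _]; apply: Ix; exact: I2_sub.
  + by move=> [h _]; apply: Ix.
  + by move=> [_ h]; apply: Iy.
Qed.


Local Notation mu := (@lebesgue_measure R \x @lebesgue_measure R)%E.

Lemma quadrantE : @quadrant R = [set` `]0, +oo[%O] `*` [set` `]0, +oo[%O] :> set (R * R).
Proof.
apply/seteqP; split => -[x y] /=; rewrite /quadrant /= !in_itv /= !andbT //.
Qed.

Lemma mquad : measurable (@quadrant R : set (measurableTypeR R * measurableTypeR R)).
Proof. by rewrite quadrantE; apply: measurableX; exact: measurable_itv. Qed.

Lemma dy_pos i l (x : R) : dyadic_int i l x -> 0 < x.
Proof.
move=> [a _]; apply: le_lt_trans a; apply: mulr_ge0 => //.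
exact/ltW/pow2_gt0.
Qed.

Lemma mA m : measurable (A m : set (measurableTypeR R)).
Proof. by apply: measurableD; exact: dy_meas. Qed.

Lemma mP n : measurable (P n : set (measurableTypeR R * measurableTypeR R)).
Proof. by case: n => [|m] /=; apply: measurableX; first [exact: dy_meas | exact: mA]. Qed.

Lemma mQ n : measurable (Q n : set (measurableTypeR R * measurableTypeR R)).
Proof. by case: n => [|m] /=; apply: measurableX; first [exact: dy_meas | exact: mA]. Qed.

Lemma P_sub n : P n `<=` @quadrant R.
Proof.
case: n => [|m] [x y] /= [a b]; split => /=;
  by [apply: dy_pos a | apply: dy_pos b | case: a => a _; exact: dy_pos a | case: b => b _; exact: dy_pos b].
Qed.

Lemma Q_sub n : Q n `<=` @quadrant R.
Proof.
case: n => [|m] [x y] /= [a b]; split => /=;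
  by [apply: dy_pos a | apply: dy_pos b | case: a => a _; exact: dy_pos a | case: b => b _; exact: dy_pos b].
Qed.

Lemma mg n : measurable_fun (@quadrant R : set (measurableTypeR R * measurableTypeR R)) (g n).
Proof.
apply: emeasurable_funD; apply/measurable_EFinP; apply: measurable_funM => //.
- exact: measurable_indic (mP n).
- exact: measurable_indic (mQ n).
Qed.

Lemma int_g n : (\int[mu]_(z in @quadrant R) g n z =
  (cn n)%:E * mu (P n) + (cn n)%:E * mu (Q n))%E.
Proof.
rewrite /g ge0_integralD //; first last.
- apply/measurable_EFinP; apply: measurable_funM => //; exact: measurable_indic (mQ n).
- by move=> z _; rewrite lee_fin mulr_ge0 ?cn_ge0 ?indic_ge0.
- apply/measurable_EFinP; apply: measurable_funM => //; exact: measurable_indic (mP n).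
- by move=> z _; rewrite lee_fin mulr_ge0 ?cn_ge0 ?indic_ge0.
- exact: mquad.
rewrite (integralZl_indic mquad (fun=> P n)); first last.
- exact: mP.
- by move=> h; have := cn_ge0 n; rewrite leNgt h.
rewrite (integralZl_indic mquad (fun=> Q n)); first last.
- exact: mQ.
- by move=> h; have := cn_ge0 n; rewrite leNgt h.
rewrite !integral_indic; try exact: mP; try exact: mQ; try exact: mquad.
by rewrite (setIidl (P_sub n)) (setIidl (Q_sub n)).
Qed.


Lemma L_gt0 : 0 < L. Proof. exact: len_gt0. Qed.

Lemma F1 : c ^+ 2 = L^-1.
Proof.
rewrite /c /L /dyadic_len invr_expz opprK -powR_mulrn ?powR_ge0 // -powRrM.
rewrite -powR_intmul //; congr (_ `^ _); by rewrite divfK // pnatr_eq0.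
Qed.

Lemma F2 : dyadic_len R (j + 1) = L / 2.
Proof.
rewrite /dyadic_len /L /dyadic_len opprD exprzDr ?two_unit //.
Qed.

Lemma F3 (m : nat) : dyadic_len R (j - m%:Z) = L * 2 ^+ m.
Proof.
rewrite /dyadic_len /L /dyadic_len opprB addrC exprzDr ?two_unit //.
Qed.

Lemma F5 (n : nat) (t : R) : (L * 2 ^+ n) `^ t = L `^ t * (2 `^ t) ^+ n.
Proof.
rewrite powRM ?exprn_ge0 //; last exact/ltW/L_gt0.
by rewrite -powR_mulrn // powRAC powR_mulrn // powR_ge0.
Qed.

Lemma leb_A m : lebesgue_measure (A m : set (measurableTypeR R)) =
  (D m - dyadic_len R (j - m%:Z))%:E.
Proof.
rewrite /A measureD; first last.
- by change (lebesgue_measure (J m.+1 : set (measurableTypeR R)) < +oo)%E; rewrite /J dy_leb ltry.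
- exact: dy_meas.
- exact: dy_meas.
change ((lebesgue_measure (J m.+1 : set (measurableTypeR R)) - lebesgue_measure (J m.+1 `&` J m : set (measurableTypeR R)))%E = (D m - dyadic_len R (j - m%:Z))%:E).
rewrite setIidr; last by move=> y h; exact: (J_mono _ h).
by rewrite /J !dy_leb EFinB -!/(J _) /D F3 -addn1 F3.
Qed.


Definition Lp := L `^ (2 * s).
Definition q : R := 2 `^ (2 * s).
Definition tt n := match n with 0%N => 2 / Lp | m.+1 => Lp^-1 * (q^-1) ^+ m.+1 end.

Lemma Lp_gt0 : 0 < Lp. Proof. exact/powR_gt0/L_gt0. Qed.
Lemma q_gt0 : 0 < q. Proof. exact: powR_gt0. Qed.

Lemma muX (X Y : set (measurableTypeR R)) : measurable X -> measurable Y ->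
  mu (X `*` Y) = (lebesgue_measure X * lebesgue_measure Y)%E.
Proof. by move=> mX mY; exact: product_measure1E. Qed.

Lemma termE n : ((cn n)%:E * mu (P n) + (cn n)%:E * mu (Q n))%E = (tt n)%:E.
Proof.
case: n => [|m] /=.
- rewrite !muX; try exact: dy_meas.
  rewrite /I1 /I2 !dy_leb F2 -!EFinM -EFinD; congr (_%:E).
  have hc := c_gt0.
  rewrite ger0_norm; last by apply: addr_ge0; apply: ltW.
  have -> : (c + c) ^+ 2 = 4 * c ^+ 2 by ring.
  rewrite F1 -/Lp.
  have := L_gt0; have := Lp_gt0.
  move=> h1 h2; field; rewrite ?gt_eqF //.
- rewrite !muX; try exact: dy_meas; try exact: mA.
  rewrite /I !dy_leb leb_A -!EFinM -EFinD; congr (_%:E).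
  have hc := c_gt0.
  rewrite ger0_norm; last by apply: ltW.
  rewrite F1 /D !F3 F5 -/Lp -/q exprVn -/L.
  set Y := q ^+ m.+1; rewrite exprS.
  set X := 2 ^+ m.
  have h1 : 0 < Y by rewrite /Y; exact/exprn_gt0/q_gt0.
  have h2 : 0 < X by rewrite /X; exact/exprn_gt0.
  have h4 := Lp_gt0; have h5 := L_gt0.
  clearbody X Y.
  field.
  by rewrite (gt_eqF h1) (gt_eqF h4) (gt_eqF h2) (gt_eqF h5).
Qed.


Lemma q_gt1 : 0 < s -> 1 < q.
Proof.
move=> hs; rewrite lt_neqAle; apply/andP; split.
- rewrite eq_sym /q powR_eq1; apply/negP => /or3P[].
  + by move/eqP => h; lra.
  + by move=> h; lra.
  + by move/eqP => h; lra.
- have h12 : (1:R) <= 2 by rewrite ler1n.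
  have := @ler_powR R 2 h12 0 (2 * s); rewrite powRr0; apply.
  by rewrite mulr_ge0 // ltW.
Qed.

Lemma energy_val : energy s (haar j k) = (\sum_(n <oo) (tt n)%:E)%E.
Proof.
rewrite /energy.
rewrite (eq_integral (fun z : measurableTypeR R * measurableTypeR R => \sum_(n <oo) g n z)%E); last first.
  by move=> z /set_mem zq; exact: pointwise.
rewrite integral_nneseries; first last.
- by move=> n z _; exact: g_ge0.
- exact: mg.
- exact: mquad.
apply: eq_eseriesr => n _; rewrite int_g termE //.
Qed.

Lemma tt_ge0 n : 0 <= tt n.
Proof.
have h1 := Lp_gt0; have h2 := q_gt0.
case: n => [|m] /=; first by rewrite divr_ge0 // ltW.
by rewrite mulr_ge0 ?exprn_ge0 // ltW // invr_gt0.
Qed.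

Lemma sum_tt : 0 < s -> (\sum_(n <oo) (tt n)%:E)%E = (gamma2 s * L `^ (- (2 * s)))%:E.
Proof.
move=> hs.
have hq := q_gt1 hs.
have hLp := Lp_gt0.
set r := q^-1.
have r0 : 0 < r by rewrite invr_gt0; exact: q_gt0.
have r1 : r < 1 by rewrite invf_lt1 // q_gt0.
rewrite nneseries_recl //; last by move=> n _; rewrite lee_fin tt_ge0.
rewrite -(@nneseries_addn _ (fun n => (tt n)%:E) 1%N); last by move=> n; rewrite lee_fin tt_ge0.
rewrite (eq_eseriesr (g := fun i => (geometric (Lp^-1 * r) r i)%:E)); last first.
  by move=> i _; rewrite addn1 /= exprS mulrA.
have : eseries (fun i => (geometric (Lp^-1 * r) r i)%:E) @ \oo --> ((Lp^-1 * r) * (1 - r)^-1)%:E.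
  apply: cvg_EFin; first by apply: nearW => x; rewrite /eseries /= sumEFin.
  rewrite [X in X @ _ --> _](_ : _ = series (geometric (Lp^-1 * r) r)); last first.
    by apply/funext => x; rewrite /= /eseries /= sumEFin.
  by apply: cvg_geometric_series; rewrite ger0_norm // ltW.
move/cvg_lim => -> //.
rewrite /= -EFinD; congr (_%:E).
rewrite /gamma2 !powRN -/q -/r -/L -/Lp.
have h1 : 1 - r != 0 by rewrite subr_eq0 eq_sym lt_eqF.
have h2 : Lp != 0 by rewrite gt_eqF.
field.
by rewrite h1 h2.
Qed.

End S.

Theorem lemma2p4 (R : realType) (s : R) (hs0 : 0 < s) (hs1 : s < 2^-1)
  (j : int) (k : nat) :
  energy s (@haar R j k) = (gamma2 s * @dyadic_len R j `^ (- (2 * s)))%:E.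
Proof.
by rewrite energy_val sum_tt.
Qed.
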